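(* Let $\mathbb{K}=(K,+,0)$ be a positive commutative monoid and let $H$ be a hypergraph. If $H$ has the local-to-global consistency property for $\mathbb{K}$-relations, then $H$ is acyclic.
   Context: A commutative monoid $\mathbb{K}=(K,+,0)$ is positive if $p+q=0$ implies $p=q=0$; all monoids are assumed to have at least two elements. An attribute $A$ has an associated domain $\mathrm{Dom}(A)$ (attribute domains are arbitrary sets and may be chosen as needed). For a finite set $X$ of attributes, $\mathrm{Tup}(X)$ is the set of functions assigning to each $A\in X$ an element of $\mathrm{Dom}(A)$ ($X$-tuples); for $Y\subseteq X$ and $t\in\mathrm{Tup}(X)$, $t[Y]$ is the restriction of $t$ to $Y$. A $\mathbb{K}$-relation over $X$ is a function $R:\mathrm{Tup}(X)\to K$ whose support $R'=\{t:R(t)\neq 0\}$ is finite. For $Y\subseteq X$ the marginal $R[Y]$ is the $\mathbb{K}$-relation over $Y$ with $R[Y](t)=\sum_{r\in R',\,r[Y]=t}R(r)$. For a sequence $X_1,\dots,X_m$ of finite attribute sets (a schema) and $\mathbb{K}$-relations $R_i$ over $X_i$, the collection $R_1,\dots,R_m$ is $k$-wise consistent if for every $q\le k$ and indices $i_1,\dots,i_q\in[m]$ there is a $\mathbb{K}$-relation $W$ over $X_{i_1}\cup\dots\cup X_{i_q}$ with $W[X_{i_j}]=R_{i_j}$ for all $j$; pairwise consistent means $2$-wise, globally consistent means $m$-wise. A hypergraph $H=(V,E)$ (finite, hyperedges non-empty subsets of $V$) is identified with the schema listing its hyperedges, vertices viewed as attributes. $H$ has the local-to-global consistency property for $\mathbb{K}$-relations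 if, for a listing $X_1,\dots,X_m$ of its hyperedges, every pairwise consistent collection of $\mathbb{K}$-relations $R_1(X_1),\dots,R_m(X_m)$ is globally consistent. $H$ is acyclic (in the sense of Beeri, Fagin, Maier, Yannakakis) iff it has a join tree: a tree whose vertices are the hyperedges of $H$ such that for every vertex $v$ of $H$, the hyperedges containing $v$ form a connected subtree. *)

(* Defs.v *)
From mathcomp Require Import all_boot.

Set Implicit Arguments.
Unset Strict Implicit.
Unset Printing Implicit Defensive.

Definition positive_comm_monoid (K : Type) (add : K -> K -> K) (zero : K) : Prop :=
  [/\ (forall x y z, add x (add y z) = add (add x y) z),
      (forall x y, add x y = add y x),
      (forall x, add zero x = x),
      (forall p q, add p q = zero -> p = zero /\ q = zero)
    & exists a b : K, a <> b].

(* Tuples.  Attributes are the elements of a finite type V, attribute  *)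
(* A has domain Dom A.  A (partial) tuple is a dependent function that *)
(* is defined (Some _) exactly on its set of attributes; an X-tuple is *)
(* a partial tuple whose domain is X.                                  *)
Definition ptuple (V : finType) (Dom : V -> eqType) :=
  {dffun forall a : V, option (Dom a)}.

Definition tdom (V : finType) (Dom : V -> eqType) (t : ptuple Dom) : {set V} :=
  [set a | t a != None].

Definition restr (V : finType) (Dom : V -> eqType) (Y : {set V}) (t : ptuple Dom)
  : ptuple Dom :=
  finfun (fun a : V => (if a \in Y then t a else None) : option (Dom a)).

(* R is a K-relation over X: a map from X-tuples to K with finite support;
   it is represented as a map on all partial tuples vanishing outside the
   X-tuples. *)
Definition is_Krel (K : Type) (zero : K) (V : finType) (Dom : V -> eqType)
  (X : {set V}) (R : ptuple Dom -> K) : Prop :=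
  (forall t, R t <> zero -> tdom t = X) /\
  (exists s : seq (ptuple Dom), forall t, R t <> zero -> t \in s).

(* The marginal is the sum
   over the (finite) support of W, computed along any duplicate-free list s
   containing the support (terms outside the support are zero). *)
Definition marginal_is (K : Type) (add : K -> K -> K) (zero : K)
  (V : finType) (Dom : V -> eqType)
  (W : ptuple Dom -> K) (Y : {set V}) (R : ptuple Dom -> K) : Prop :=
  exists s : seq (ptuple Dom),
    [/\ uniq s, (forall r, W r <> zero -> r \in s)
      & forall t, R t = foldr add zero [seq W r | r <- s & restr Y r == t]].

Definition kwise_consistent (K : Type) (add : K -> K -> K) (zero : K)
  (V : finType) (Dom : V -> eqType) (m : nat) (X : 'I_m -> {set V})
  (R : 'I_m -> ptuple Dom -> K) (k : nat) : Prop :=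
  forall (q : nat), q <= k -> forall idx : 'I_q -> 'I_m,
    exists W : ptuple Dom -> K,
      is_Krel zero (\bigcup_(j < q) X (idx j)) W /\
      forall j : 'I_q, marginal_is add zero W (X (idx j)) (R (idx j)).

Definition pairwise_consistent K add zero V Dom m X R :=
  @kwise_consistent K add zero V Dom m X R 2.
Definition globally_consistent K add zero V Dom m X R :=
  @kwise_consistent K add zero V Dom m X R m.

Definition hypergraph (V : finType) (E : {set {set V}}) : Prop :=
  forall e, e \in E -> e != set0.

Definition listing (V : finType) (E : {set {set V}}) (m : nat)
  (X : 'I_m -> {set V}) : Prop :=
  injective X /\ (forall e, e \in E <-> exists i, X i = e).

Definition local_to_global (K : Type) (add : K -> K -> K) (zero : K)
  (V : finType) (E : {set {set V}}) : Prop :=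
  exists (m : nat) (X : 'I_m -> {set V}), listing E X /\
    forall (Dom : V -> eqType) (R : 'I_m -> ptuple Dom -> K),
      (forall i, is_Krel zero (X i) (R i)) ->
      pairwise_consistent add zero X R -> globally_consistent add zero X R.

Definition is_tree (T : finType) (N : {set T}) (g : rel T) : Prop :=
  [/\ (forall x y, g x y -> (x \in N) && (y \in N)),
      (forall x y, g x y = g y x),
      (forall x, ~~ g x x),
      (forall x y, x \in N -> y \in N ->
         exists p : seq T, path g x p /\ last x p = y)
    & (forall p : seq T, 3 <= size p -> ~ ucycle g p)].

Definition join_tree (V : finType) (E : {set {set V}}) (g : rel {set V}) : Prop :=
  is_tree E g /\
  forall (v : V) (e f : {set V}), e \in E -> f \in E -> v \in e -> v \in f ->
    exists p : seq {set V}, [/\ path g e p, last e p = f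
                              & forall x, x \in p -> v \in x].

Definition acyclic (V : finType) (E : {set {set V}}) : Prop :=
  exists g : rel {set V}, join_tree E g.

(* Main.v *)
Require Import Defs.
From mathcomp Require Import all_boot all_algebra.
From Stdlib Require Import Classical.
From mathcomp Require Import ring zify.
Import GRing.Theory.
Set Implicit Arguments. Unset Strict Implicit. Unset Printing Implicit Defensive.

Definition nm (K : Type) (add : K -> K -> K) (zero : K) (n : nat) (a : K) : K :=
  iter n (add a) zero.

Lemma nmD K add zero (hK : @positive_comm_monoid K add zero) m n a :
  nm add zero (m + n) a = add (nm add zero m a) (nm add zero n a).
Proof.
case: hK => hA hC h0 hP _.
elim: m => [|m IH] /=; first by rewrite h0.
by rewrite /nm /= -/(nm add zero (m + n) a) IH hA.
Qed.

Lemma nm_eq0 K add zero (hK : @positive_comm_monoid K add zero) n a :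
  a <> zero -> nm add zero n a = zero -> n = 0.
Proof.
case: hK => hA hC h0 hP _ ha.
case: n => [//|n] /= /hP [] //.
Qed.

Lemma nm0 K add zero n : n = 0 -> nm add zero n (zero : K) = zero.
Proof. by move->. Qed.

Lemma foldr_nm K add zero (hK : @positive_comm_monoid K add zero) (T : Type)
  (f : T -> nat) a (l : seq T) :
  foldr add zero [seq nm add zero (f r) a | r <- l] = nm add zero (\sum_(r <- l) f r) a.
Proof.
elim: l => [|x l IH] /=; first by rewrite big_nil.
by rewrite IH big_cons (nmD hK).
Qed.

Lemma foldr_nz K add zero (hK : @positive_comm_monoid K add zero) (T : eqType)
  (f : T -> K) (l : seq T) (x : T) :
  x \in l -> f x <> zero -> foldr add zero [seq f r | r <- l] <> zero.
Proof.
case: hK => hA hC h0 hP _.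
elim: l => [//|y l IH] /=; rewrite inE => /orP [/eqP -> | xl] xz /hP [] //.
by move=> _; apply: IH.
Qed.

Lemma foldr_ex K add zero (hK : @positive_comm_monoid K add zero) (T : eqType)
  (f : T -> K) (l : seq T) :
  foldr add zero [seq f r | r <- l] <> zero -> exists2 x, x \in l & f x <> zero.
Proof.
case: hK => hA hC h0 hP _.
elim: l => [//|y l IH] /= H.
case: (classic (f y = zero)) => [yz|]; last by exists y; rewrite ?inE ?eqxx.
have [x xl xz] : exists2 x, x \in l & f x <> zero.
  by apply: IH => H'; apply: H; rewrite yz H' h0.
by exists x; rewrite // inE xl orbT.
Qed.

Definition Jc (V : finType) (A : {set {set V}}) (U : {set V}) (g : rel {set V}) :=
  forall v e f, v \in U -> e \in A -> f \in A -> v \in e -> v \in f ->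
    exists p, [/\ path g e p, last e p = f & forall x, x \in p -> v \in x].

Lemma card_le1_eq (T : finType) (A : {set T}) x y :
  #|A| <= 1 -> x \in A -> y \in A -> x = y.
Proof.
move=> hA xA yA; apply/eqP; apply/negPn/negP => nxy.
have : #|[set x; y]| <= #|A| by apply: subset_leq_card; apply/subsetP => z;
  rewrite !inE => /orP [] /eqP ->.
by rewrite cards2 nxy; move=> /leq_trans /(_ hA).
Qed.

Lemma tree_base (V : finType) (A : {set {set V}}) (U : {set V}) :
  #|A| <= 1 -> exists g, is_tree A g /\ Jc A U g.
Proof.
move=> hA; exists [rel x y | false]; split.
  split => //.
  - move=> x y xA yA; exists [::]; split => //; exact: (card_le1_eq hA xA yA).
  - move=> [|x p] //= _; rewrite /ucycle /= rcons_path /=; by case: p.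
move=> v e f _ eA fA _ _; exists [::]; split => //.
by rewrite (card_le1_eq hA eA fA).
Qed.

Lemma tree_vertex (V : finType) (A : {set {set V}}) (U : {set V}) v g :
  #|[set X in A | v \in X]| <= 1 -> Jc A (U :\ v) g -> Jc A U g.
Proof.
move=> hv J w e f wU eA fA we wf.
case: (eqVneq w v) => [wv|wnv].
  subst w; exists [::]; split => //.
  by apply: (card_le1_eq hv); rewrite inE ?eA ?fA.
by apply: J => //; rewrite !inE wnv.
Qed.

Definition leafrel (V : finType) (g : rel {set V}) (X Y : {set V}) : rel {set V} :=
  [rel a b | g a b || ((a == X) && (b == Y)) || ((a == Y) && (b == X))].

Lemma leaf_sub (V : finType) (g : rel {set V}) X Y : subrel g (leafrel g X Y).
Proof. by move=> a b h; rewrite /leafrel /= h. Qed.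

Lemma tree_leaf (V : finType) (A : {set {set V}}) (U : {set V}) X Y g :
  X \in A -> Y \in A -> X != Y -> X :&: U \subset Y :&: U ->
  is_tree (A :\ X) g -> Jc (A :\ X) U g ->
  is_tree A (leafrel g X Y) /\ Jc A U (leafrel g X Y).
Proof.
move=> XA YA nXY sXY [g1 g2 g3 g4 g5] J.
have YA' : Y \in A :\ X by rewrite !inE eq_sym nXY.
have gX : forall b, ~~ g X b.
  by move=> b; apply/negP => /g1 /andP []; rewrite !inE eqxx.
have gX' : forall b, ~~ g b X.
  by move=> b; rewrite g2 gX.
have inA : forall a, a \in A :\ X -> a \in A by move=> a /setD1P [].
have inD : forall a, a != X -> a \in A -> a \in A :\ X by move=> a h1 h2; rewrite !inE h1 h2.
have lsub := @leaf_sub _ g X Y; rewrite /leafrel in lsub *; split; first split.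
- move=> a b /= /orP [/orP [/g1 /andP [/inA -> /inA ->] //|]|] /andP [/eqP -> /eqP ->];
  by rewrite XA YA.
- by move=> a b /=; rewrite g2 (andbC (a == X)) (andbC (a == Y)) orbAC.
- move=> a /=; rewrite (negbTE (g3 a)) /=; apply/negP => /orP [] /andP [/eqP -> /eqP E];
  by move: nXY; rewrite E eqxx.
- move=> x y xA yA.
  case: (eqVneq x X) => [->|nxX]; case: (eqVneq y X) => [->|nyX].
  + by exists [::].
  + have [p [pp lp]] := g4 Y y YA' (inD _ nyX yA).
    exists (Y :: p); split => //=; apply/andP; split; first by rewrite !eqxx orbT.
    exact: sub_path lsub _ _ pp.
  + have [p [pp lp]] := g4 x Y (inD _ nxX xA) YA'.
    exists (rcons p X); rewrite last_rcons rcons_path lp /= !eqxx !orbT andbT; split => //.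
    exact: sub_path lsub _ _ pp.
  + have [p [pp lp]] := g4 x y (inD _ nxX xA) (inD _ nyX yA).
    exists p; split => //; exact: sub_path lsub _ _ pp.
- move=> p sp /andP [cp up].
  case: (boolP (X \in p)) => Xp.
    case: (rot_to Xp) => i q rq.
    have : ucycle (leafrel g X Y) (X :: q) by rewrite -rq rot_ucycle /ucycle cp up.
    have sq : 2 <= size q by move: sp; rewrite -(size_rot i) rq.
    case: q sq {rq} => [//|y1 q] /= sq /andP [].
    rewrite /leafrel /= rcons_path /= => /andP [h1 /andP [_ h2]] /andP [nX /andP [ny1 _]].
    move: h1; rewrite (negbTE (gX y1)) eqxx /= => /orP [/eqP E1|/andP [/eqP E _]];
      last by move: nXY; rewrite E eqxx.
    move: h2; rewrite (negbTE (gX' _)) /= eqxx andbT => /orP [/andP [/eqP E _]|/eqP E2].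
      have : last y1 q \in y1 :: q by apply: mem_last.
      by rewrite E (negbTE nX).
    case: q sq ny1 E2 {nX} => [//|z q] _ ny1 E2.
    have : last z q \in z :: q by apply: mem_last.
    by rewrite /= in E2; rewrite E2 -E1 => /(negP ny1).
  apply: (g5 p sp); apply/andP; split => //.
  have allp : all (predC1 X) p by apply/allP => z zp /=; apply/eqP => E; move: Xp; rewrite -E zp.
  apply: (sub_in_cycle (P := predC1 X) _ allp cp) => a b /= /negbTE aX /negbTE bX.
  by rewrite aX bX !andbF !orbF.
move=> v e f vU eA fA ve vf.
have vY : forall Z, Z = X -> v \in Z -> v \in Y.
  move=> Z -> vX; have : v \in X :&: U by rewrite inE vX vU.
  by move/(subsetP sXY); rewrite inE => /andP [].
case: (eqVneq e X) => [eX|neX]; case: (eqVneq f X) => [fX|nfX].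
- by exists [::]; rewrite eX fX.
- have [p [pp lp ap]] := J v Y f vU YA' (inD _ nfX fA) (vY e eX ve) vf.
  exists (Y :: p); split => //=.
  + rewrite eX; apply/andP; split; [by rewrite !eqxx orbT | exact: sub_path lsub _ _ pp].
  + by move=> x; rewrite inE => /orP [/eqP ->|/ap //]; apply: (vY e eX ve).
- have [p [pp lp ap]] := J v e Y vU (inD _ neX eA) YA' ve (vY f fX vf).
  exists (rcons p X); rewrite last_rcons rcons_path lp /= !eqxx !orbT andbT fX; split => //.
  + exact: sub_path lsub _ _ pp.
  + by move=> x; rewrite mem_rcons inE => /orP [/eqP ->|/ap //]; rewrite -fX.
- have [p [pp lp ap]] := J v e f vU (inD _ neX eA) (inD _ nfX fA) ve vf.
  by exists p; split => //; exact: sub_path lsub _ _ pp.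
Qed.

Definition Inv (V : finType) (E A : {set {set V}}) (U : {set V}) :=
  forall Z, Z \in E -> exists2 X, X \in A & Z :&: U \subset X :&: U.

Lemma main_ind (V : finType) (E : {set {set V}})
  (Hstuck : forall (A : {set {set V}}) (U : {set V}), A \subset E -> Inv E A U -> 1 < #|A| ->
     (forall v, v \in U -> 1 < #|[set X in A | v \in X]|) ->
     (forall X Y : {set V}, X \in A -> Y \in A -> X != Y -> ~~ (X :&: U \subset Y :&: U)) -> False) :
  forall n (A : {set {set V}}) (U : {set V}), #|A| + #|U| <= n -> A \subset E -> Inv E A U ->
    exists g, is_tree A g /\ Jc A U g.
Proof.
elim=> [|n IH] A U hn hAE hI.
  by apply: tree_base; move: hn; rewrite leqn0 addn_eq0 => /andP [/eqP -> _].
case: (leqP #|A| 1) => hA1; first exact: tree_base.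
case: (pickP [pred v | (v \in U) && (#|[set X in A | v \in X]| <= 1)]) => [v /andP [vU hv] | hnov].
  have h1 : #|A| + #|U :\ v| <= n.
    by move: hn; rewrite (cardsD1 v U) vU /= addnS ltnS.
  have h2 : Inv E A (U :\ v).
    move=> Z ZE; have [X XA sX] := hI Z ZE; exists X => //.
    apply/subsetP => w; rewrite !inE => /andP [wZ /andP [nwv wU]].
    have : w \in Z :&: U by rewrite inE wZ wU.
    by move/(subsetP sX); rewrite !inE nwv => /andP [-> ->].
  have [g [tg Jg]] := IH A (U :\ v) h1 hAE h2.
  by exists g; split => //; apply: tree_vertex hv Jg.
case: (pickP [pred XY : {set V} * {set V} | [&& XY.1 \in A, XY.2 \in A, XY.1 != XY.2 &
    XY.1 :&: U \subset XY.2 :&: U]]) => [[X Y] /and4P [XA YA nXY sXY] | hnoXY].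
  have h1 : #|A :\ X| + #|U| <= n.
    by move: hn; rewrite (cardsD1 X A) XA /= addSn ltnS.
  have h2 : A :\ X \subset E by apply: subset_trans hAE; apply: subsetDl.
  have h3 : Inv E (A :\ X) U.
    move=> Z ZE; have [X' XA' sX'] := hI Z ZE.
    case: (eqVneq X' X) => [EX|nX].
      by exists Y; [rewrite !inE eq_sym nXY YA | apply: subset_trans sXY; rewrite -EX].
    by exists X' => //; rewrite !inE nX XA'.
  have [g [tg Jg]] := IH (A :\ X) U h1 h2 h3.
  by exists (leafrel g X Y); apply: tree_leaf.
exfalso; apply: (Hstuck A U) => //.
  by move=> v vU; move: (hnov v) => /= /negbT; rewrite vU /= -ltnNge.
by move=> X Y XA YA nXY; move: (hnoXY (X, Y)) => /= /negbT; rewrite XA YA nXY.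
Qed.

Lemma acyclic_of (V : finType) (E : {set {set V}})
  (Hstuck : forall (A : {set {set V}}) (U : {set V}), A \subset E -> Inv E A U -> 1 < #|A| ->
     (forall v, v \in U -> 1 < #|[set X in A | v \in X]|) ->
     (forall X Y : {set V}, X \in A -> Y \in A -> X != Y -> ~~ (X :&: U \subset Y :&: U)) -> False) :
  acyclic E.
Proof.
have [g [tg Jg]] := main_ind Hstuck (leqnn (#|E| + #|[set: V]|)) (subxx E)
  (fun Z ZE => ex_intro2 _ _ Z ZE (subxx _)).
exists g; split => // v e f eE fE ve vf.
by apply: Jg; rewrite ?inE.
Qed.

Definition Om (V : finType) := {ffun option V -> 'Z_3}.
Definition D3 (V : finType) : V -> eqType := fun _ => ('Z_3 : eqType).
Definition proj (V : finType) (S : {set V}) (y : Om V) : ptuple (@D3 V) :=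
  finfun (fun v : V => (if v \in S then Some (y (Some v)) else None) : option (D3 v)).
Definition cnt (V : finType) (P : pred (Om V)) (S : {set V}) (t : ptuple (@D3 V)) : nat :=
  #|[set y : Om V | P y && (proj S y == t)]|.
Definition upd (V : finType) (y : Om V) (k : option V) (d : 'Z_3) : Om V :=
  [ffun k' => if k' == k then d else y k'].
Definition inS (V : finType) (S : {set V}) (k : option V) :=
  if k is Some v then v \in S else false.

Lemma proj_dom (V : finType) (S : {set V}) y : tdom (proj S y) = S.
Proof.
by apply/setP => v; rewrite /tdom inE /proj ffunE; case: (v \in S).
Qed.

Lemma restr_proj (V : finType) (S Y : {set V}) y :
  Y \subset S -> restr Y (proj S y) = proj Y y.
Proof.
move=> sYS; apply/ffunP => v; rewrite /restr /proj !ffunE.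
by case vY: (v \in Y) => //; rewrite (subsetP sYS v vY).
Qed.

Lemma proj_upd (V : finType) (S : {set V}) y k d :
  ~~ inS S k -> proj S (upd y k d) = proj S y.
Proof.
move=> hk; apply/ffunP => v; rewrite /proj !ffunE.
case vS: (v \in S) => //; congr Some; rewrite /upd /=.
case: eqP => // E; move: hk; rewrite -E /= vS //.
Qed.

Lemma cnt_sum (V : finType) (P : pred (Om V)) S t :
  cnt P S t = \sum_(y : Om V) (P y && (proj S y == t) : nat).
Proof. by rewrite /cnt -sum1dep_card big_mkcond. Qed.

Definition supp_seq (V : finType) (S : {set V}) : seq (ptuple (@D3 V)) :=
  undup [seq proj S y | y <- enum {: Om V}].

Lemma in_supp_seq (V : finType) (S : {set V}) y : proj S y \in supp_seq S.
Proof. by rewrite mem_undup; apply/mapP; exists y; rewrite ?mem_enum. Qed.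

Lemma cnt_marg (V : finType) (P : pred (Om V)) (S Y : {set V}) t :
  Y \subset S ->
  \sum_(r <- supp_seq S | restr Y r == t) cnt P S r = cnt P Y t.
Proof.
move=> sYS.
under eq_bigr do rewrite cnt_sum.
rewrite exchange_big cnt_sum; apply: eq_bigr => y _.
rewrite (big_rem (proj S y)) ?in_supp_seq // restr_proj // eqxx andbT.
rewrite big1_seq ?addn0; first by case: (proj Y y == t); case: (P y).
move=> r /andP [_ rr].
case: eqP => [E|]; last by rewrite andbF.
by move: rr; rewrite -E mem_rem_uniqF // undup_uniq.
Qed.

Lemma cnt_pos (V : finType) (P : pred (Om V)) S t :
  cnt P S t != 0 -> exists y, P y /\ proj S y = t.
Proof.
rewrite /cnt -lt0n card_gt0 => /set0Pn [y]; rewrite inE => /andP [Py /eqP E].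
by exists y.
Qed.

Lemma W_supp K add zero (V : finType) (P : pred (Om V)) S c (a : K) t :
  nm add zero (c * cnt P S t) a <> zero -> exists y, P y /\ proj S y = t.
Proof.
move=> h; apply: cnt_pos; apply/eqP => E; apply: h; by rewrite E muln0.
Qed.

Lemma marg_cnt K add zero (hK : @positive_comm_monoid K add zero) (V : finType)
  (P : pred (Om V)) (S Y : {set V}) c (a : K) :
  Y \subset S ->
  marginal_is add zero (fun t => nm add zero (c * cnt P S t) a) Y
    (fun t => nm add zero (c * cnt P Y t) a).
Proof.
move=> sYS; exists (supp_seq S); split.
- exact: undup_uniq.
- by move=> r h; have [y [_ <-]] := W_supp h; apply: in_supp_seq.
move=> t; rewrite (@foldr_nm _ _ _ hK _ (fun r => c * cnt P S r)).
by rewrite big_filter -big_distrr /= cnt_marg.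
Qed.

Lemma Krel_cnt K add zero (V : finType) (P : pred (Om V)) (S : {set V}) c (a : K) :
  is_Krel zero S (fun t => nm add zero (c * cnt P S t) a).
Proof.
split.
- by move=> t h; have [y [_ <-]] := W_supp h; apply: proj_dom.
- by exists (supp_seq S) => r h; have [y [_ <-]] := W_supp h; apply: in_supp_seq.
Qed.

Local Open Scope ring_scope.

Lemma sqZ3 (b : 'Z_3) : b != 0 -> b * b = 1.
Proof. case: b => -[|[|[|[|]]]] // ? _; by apply/val_inj. Qed.

Lemma cnt_indep (V : finType) (P : pred (Om V)) (L : Om V -> 'Z_3) (b : 'Z_3) k S t
  (c : 'Z_3) :
  b != 0 -> (forall y d, L (upd y k d) = L y + b * (d - y k)) ->
  (forall y d, P (upd y k d) = P y) -> ~~ inS S k ->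
  (3 * cnt [pred y | P y && (L y == c)] S t = cnt P S t)%N.
Proof.
move=> b0 hL hP hk.
pose C j := [set y | P y && (proj S y == t) && (L y == j)].
have le : forall j j', (#|C j| <= #|C j'|)%N.
  move=> j j'; pose f y := upd y k (y k + b * (j' - j)).
  have finj : injective f.
    move=> y1 y2 E; apply/ffunP => k'.
    have := congr1 (fun z : Om V => z k') E; rewrite /f /upd !ffunE.
    by case: eqP => [->|//] /addIr.
  rewrite -(card_imset _ finj); apply: subset_leq_card; apply/subsetP => z.
  case/imsetP => y; rewrite !inE => /andP [/andP [Py pt] /eqP Ly] ->.
  rewrite /f hP Py proj_upd // pt hL Ly /=.
  rewrite addrAC subrr add0r mulrA sqZ3 // mul1r addrC subrK //.
have eqC : forall j, #|C j| = #|C c|.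
  by move=> j; apply/eqP; rewrite eqn_leq !le.
have -> : cnt [pred y | P y && (L y == c)] S t = #|C c|.
  by apply: eq_card => y; rewrite !inE /= andbAC.
rewrite cnt_sum.
have -> : (\sum_(y : Om V) (P y && (proj S y == t) : nat) =
          \sum_(y : Om V) \sum_(j : 'Z_3) (P y && (proj S y == t) && (L y == j) : nat))%N.
  apply: eq_bigr => y _; rewrite (bigD1 (L y)) //= eqxx andbT big1 ?addn0 //.
  by move=> j nj; case: (L y =P j) => [E|]; [by move: nj; rewrite E eqxx | rewrite andbF].
rewrite exchange_big /=.
rewrite (eq_bigr (fun _ => #|C c|)); last first.
  move=> j _; rewrite -(eqC j) /C -sum1dep_card [RHS]big_mkcond.
  by apply: eq_bigr => y _; case: (_ && _).
by rewrite big_const_ord /= !mulSn mul0n !addn0.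
Qed.


Lemma coef_ex_n (T : finType) n : forall (S : {set T}), (#|S| <= n)%N -> #|S| != 1%N ->
  exists f : T -> 'Z_3, (forall x, (f x != 0) = (x \in S)) /\ \sum_x f x = 0.
Proof.
have base : forall S : {set T}, #|S| = 0%N ->
  exists f : T -> 'Z_3, (forall x, (f x != 0) = (x \in S)) /\ \sum_x f x = 0.
  move=> S /eqP; rewrite cards_eq0 => /eqP ->; exists (fun _ => 0); split.
    by move=> x; rewrite inE eqxx.
  by rewrite big1.
elim: n => [|n IH] S hn h1; first by apply: base; lia.
case: (eqVneq #|S| 0%N) => [/base //|h0].
case: (eqVneq #|S| 3%N) => [h3|h3].
  exists (fun x => (x \in S)%:R); split.
    by move=> x; case: (x \in S).
  have -> : \sum_x ((x \in S)%:R : 'Z_3) = \sum_(x in S) 1.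
    by rewrite [RHS]big_mkcond; apply: eq_bigr => x _; case: (x \in S).
  by rewrite sumr_const h3; apply/val_inj.
have [x xS] : exists x, x \in S by apply/set0Pn; rewrite -card_gt0 lt0n.
have hS1 := cardsD1 x S; rewrite xS in hS1.
have [y yS] : exists y, y \in S :\ x by apply/set0Pn; rewrite -card_gt0; lia.
have hS2 := cardsD1 y (S :\ x); rewrite yS in hS2.
have [f [hf sf]] := IH (S :\ x :\ y) ltac:(lia) ltac:(lia).
have nxy : y != x by move: yS; rewrite !inE => /andP [].
have fx : f x = 0 by apply/eqP; rewrite -[_ == _]negbK hf !inE eqxx andbF.
have fy : f y = 0 by apply/eqP; rewrite -[_ == _]negbK hf !inE eqxx.
exists (fun z => f z + (z == x)%:R - (z == y)%:R); split.
  move=> z; case: (eqVneq z x) => [->|zx].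
    by rewrite fx (eq_sym x y) (negbTE nxy) xS subr0 add0r.
  case: (eqVneq z y) => [->|zy].
    by rewrite fy /=; move: yS; rewrite !inE => /andP [_ ->].
  by rewrite subr0 addr0 hf !inE zx zy.
rewrite sumrB big_split /= sf add0r.
rewrite (bigD1 x) //= eqxx big1 ?addr0; last by move=> z /negbTE ->.
rewrite (bigD1 y) //= eqxx big1 ?addr0; last by move=> z /negbTE ->.
by rewrite subrr.
Qed.

Lemma coef_ex (T : finType) (S : {set T}) : #|S| != 1%N ->
  exists f : T -> 'Z_3, (forall x, (f x != 0) = (x \in S)) /\ \sum_x f x = 0.
Proof. exact: (coef_ex_n (leqnn _)). Qed.


Definition labU (V : finType) (A : {set {set V}}) (U : {set V}) (Z : {set V}) :
  option {set V} := [pick X in A | Z :&: U == X :&: U].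
Definition Lfun (V : finType) (a : V -> {set V} -> 'Z_3) (l : option {set V}) (y : Om V)
  : 'Z_3 := match l with None => y None | Some X => \sum_v a v X * y (Some v) end.
Definition cst (V : finType) (X0 : {set V}) (l : option {set V}) : 'Z_3 :=
  match l with None => 0 | Some X => if X == X0 then 1 else 0 end.
Definition Qp (V : finType) a X0 (l : option {set V}) : pred (Om V) :=
  fun y => Lfun a l y == cst X0 l.
Definition coefK (V : finType) (a : V -> {set V} -> 'Z_3) (l : option {set V})
  (k : option V) : 'Z_3 :=
  match l, k with
  | None, None => 1 | None, Some _ => 0 | Some _, None => 0 | Some X, Some v => a v X end.

Lemma Lupd (V : finType) a l (y : Om V) k d :
  Lfun a l (upd y k d) = Lfun a l y + coefK a l k * (d - y k).
Proof.
case: l => [X|] /=; last first.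
  rewrite /upd ffunE; case: k => [v|] /=; first by rewrite mul0r addr0.
  by rewrite mul1r addrC subrK.
case: k => [v0|] /=; last first.
  rewrite mul0r addr0; apply: eq_bigr => v _; by rewrite /upd ffunE.
have -> : \sum_v a v X * upd y (Some v0) d (Some v) =
    \sum_v (a v X * y (Some v) + (v == v0)%:R * (a v0 X * (d - y (Some v0)))).
  apply: eq_bigr => v _; rewrite /upd ffunE.
  case: (eqVneq v v0) => [->|nv]; first by rewrite eqxx mul1r; ring.
  have -> : (Some v == Some v0) = false by apply/negbTE; rewrite /= nv.
  by rewrite mul0r addr0.
rewrite big_split /=; congr (_ + _).
rewrite (bigD1 v0) //= eqxx mul1r big1 ?addr0 // => v /negbTE ->; by rewrite mul0r.
Qed.

Lemma lab_some (V : finType) (A : {set {set V}}) U Z X :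
  labU A U Z = Some X -> X \in A /\ Z :&: U = X :&: U.
Proof.
rewrite /labU; case: pickP => [X' /andP [XA /eqP E] [<-]|//]; by split.
Qed.

Lemma lab_eq (V : finType) (A : {set {set V}}) U Z X :
  (forall X Y, X \in A -> Y \in A -> X != Y -> ~~ (X :&: U \subset Y :&: U)) ->
  X \in A -> Z :&: U = X :&: U -> labU A U Z = Some X.
Proof.
move=> hanti XA E; rewrite /labU; case: pickP => [X' /andP [XA' /eqP E']|].
  case: (eqVneq X' X) => [->//|nX].
  by move: (hanti _ _ XA' XA nX); rewrite -E' E subxx.
by move/(_ X); rewrite XA E eqxx.
Qed.

Lemma sep (V : finType) (E A : {set {set V}}) U (a : V -> {set V} -> 'Z_3) Z Z' :
  (forall X Y, X \in A -> Y \in A -> X != Y -> ~~ (X :&: U \subset Y :&: U)) ->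
  Inv E A U ->
  (forall v X, (a v X != 0) = [&& X \in A, v \in X & v \in U]) ->
  Z \in E -> labU A U Z != labU A U Z' ->
  exists k, [/\ coefK a (labU A U Z') k != 0, ~~ inS Z k & coefK a (labU A U Z) k = 0].
Proof.
move=> hanti hI ha ZE nl.
case lZ': (labU A U Z') nl => [X'|] nl; last first.
  exists None; split => //.
  by case: (labU A U Z) nl.
have [X'A EX'] := lab_some lZ'.
case: (pickP [pred v | (v \in X' :&: U) && (v \notin Z)]) => [v /andP [vXU vZ] | H];
  last first.
  have sub : X' :&: U \subset Z :&: U.
    apply/subsetP => w wXU; rewrite inE.
    have := H w; rewrite /= wXU /= => /negbFE ->.
    by move: wXU; rewrite inE => /andP [_ ->].
  have [X'' X''A sZ] := hI Z ZE.
  have EX : X' = X''.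
    apply/eqP; apply/negPn/negP => nX.
    by move: (hanti _ _ X'A X''A nX); rewrite (subset_trans sub sZ).
  have EZ : Z :&: U = X' :&: U by apply/eqP; rewrite eqEsubset sub andbT EX.
  by move: nl; rewrite (lab_eq hanti X'A EZ) eqxx.
move: vXU; rewrite inE => /andP [vX' vU].
exists (Some v); split => //=.
  by rewrite ha X'A vX' vU.
case lZ: (labU A U Z) => [X|] //=.
have [XA EX] := lab_some lZ.
apply/eqP; rewrite -[_ == _]negbK ha XA /=; apply/negP => /andP [vX _].
have : v \in Z :&: U by rewrite EX inE vX vU.
by rewrite inE (negbTE vZ).
Qed.

Definition Rel K add (zero : K) (a0 : K) (V : finType) a (X0 : {set V}) A U (Z : {set V}) :=
  fun t => nm add zero (1 * cnt (Qp a X0 (labU A U Z)) Z t) a0.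

Lemma marginal_ext K add (zero : K) (V : finType) (W : ptuple (@D3 V) -> K) Y R R' :
  (forall t, R t = R' t) -> marginal_is add zero W Y R -> marginal_is add zero W Y R'.
Proof.
by move=> h [s [us ss hs]]; exists s; split => // t; rewrite -h.
Qed.

Lemma cnt_ext (V : finType) (P P' : pred (Om V)) S t :
  P =1 P' -> cnt P S t = cnt P' S t.
Proof. by move=> h; apply: eq_card => y; rewrite !inE h. Qed.

Lemma indep_lab (V : finType) (E A : {set {set V}}) U (a : V -> {set V} -> 'Z_3) X0 Z Z' t :
  (forall X Y, X \in A -> Y \in A -> X != Y -> ~~ (X :&: U \subset Y :&: U)) ->
  Inv E A U ->
  (forall v X, (a v X != 0) = [&& X \in A, v \in X & v \in U]) ->
  Z \in E -> labU A U Z != labU A U Z' ->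
  (3 * cnt [pred y | Qp a X0 (labU A U Z) y && (Lfun a (labU A U Z') y == cst X0 (labU A U Z'))]
     Z t = cnt (Qp a X0 (labU A U Z)) Z t)%N.
Proof.
move=> hanti hI ha ZE nl.
have [k [k1 k2 k3]] := sep hanti hI ha ZE nl.
apply: (cnt_indep (b := coefK a (labU A U Z') k) (k := k)) => //.
- by move=> y d; apply: Lupd.
- by move=> y d; rewrite /Qp Lupd k3 mul0r addr0.
Qed.

Lemma pair_ok K add zero (hK : @positive_comm_monoid K add zero) (V : finType)
  (E A : {set {set V}}) U (a : V -> {set V} -> 'Z_3) X0 (a0 : K) Z Z' :
  (forall X Y, X \in A -> Y \in A -> X != Y -> ~~ (X :&: U \subset Y :&: U)) ->
  Inv E A U ->
  (forall v X, (a v X != 0) = [&& X \in A, v \in X & v \in U]) ->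
  Z \in E -> Z' \in E ->
  exists W, [/\ is_Krel zero (Z :|: Z') W,
     marginal_is add zero W Z (Rel add zero a0 a X0 A U Z) &
     marginal_is add zero W Z' (Rel add zero a0 a X0 A U Z')].
Proof.
move=> hanti hI ha ZE Z'E.
case: (eqVneq (labU A U Z) (labU A U Z')) => [El|nl].
  exists (fun t => nm add zero (1 * cnt (Qp a X0 (labU A U Z)) (Z :|: Z') t) a0); split.
  - exact: Krel_cnt.
  - exact: (marg_cnt hK _ _ _ (subsetUl Z Z')).
  - rewrite /Rel -El; exact: (marg_cnt hK _ _ _ (subsetUr Z Z')).
exists (fun t => nm add zero (3 * cnt [pred y | Qp a X0 (labU A U Z) y &&
   (Lfun a (labU A U Z') y == cst X0 (labU A U Z'))] (Z :|: Z') t) a0); split.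
- exact: Krel_cnt.
- apply: marginal_ext (marg_cnt hK _ _ _ (subsetUl Z Z')) => t.
  by rewrite /Rel mul1n (indep_lab X0 t hanti hI ha ZE nl).
- have nl' : labU A U Z' != labU A U Z by rewrite eq_sym.
  apply: marginal_ext (marg_cnt hK _ _ _ (subsetUr Z Z')) => t.
  rewrite /Rel mul1n -(indep_lab X0 t hanti hI ha Z'E (nl' : labU A U Z' != labU A U Z)).
  congr (nm _ _ (3 * _) _); apply: cnt_ext => y /=; by rewrite andbC.
Qed.

Lemma stuck_false K add zero (hK : @positive_comm_monoid K add zero) (V : finType)
  (E : {set {set V}}) (L2G : local_to_global add zero E)
  (A : {set {set V}}) (U : {set V}) :
  A \subset E -> Inv E A U -> (1 < #|A|)%N ->
  (forall v, v \in U -> 1 < #|[set X in A | v \in X]|)%N ->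
  (forall X Y : {set V}, X \in A -> Y \in A -> X != Y -> ~~ (X :&: U \subset Y :&: U)) ->
  False.
Proof.
move=> hAE hI h2 hv hanti.
have [a0 a0nz] : exists a0 : K, a0 <> zero.
  case: hK => _ _ _ _ [x [y nxy]].
  case: (classic (x = zero)) => [xz|]; last by exists x.
  by exists y => yz; apply: nxy; rewrite xz yz.
have H : forall v, exists f : {set V} -> 'Z_3,
    (forall X, (f X != 0) = (X \in [set X in A | (v \in X) && (v \in U)])) /\ \sum_X f X = 0.
  move=> v; apply: coef_ex; case vU: (v \in U).
    have -> : [set X in A | (v \in X) && true] = [set X in A | v \in X].
      by apply/setP => X; rewrite !inE andbT.
    by have := hv v vU; case: #|_| => [|[|]].
  have -> : [set X in A | (v \in X) && false] = set0.
    by apply/setP => X; rewrite !inE !andbF.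
  by rewrite cards0.
have [a Ha] := fin_all_exists H.
have ha : forall v X, (a v X != 0) = [&& X \in A, v \in X & v \in U].
  by move=> v X; rewrite (proj1 (Ha v)) !inE.
have hsum : forall v, \sum_X a v X = 0 by move=> v; exact: (proj2 (Ha v)).
have [X0 X0A] : exists X0, X0 \in A by apply/set0Pn; rewrite -card_gt0; apply: ltnW.
have [X1 X1A] : exists X1, X1 \in A :\ X0.
  apply/set0Pn; rewrite -card_gt0; move: h2; rewrite (cardsD1 X0 A) X0A //.
have nX10 : X1 != X0 by move: X1A; rewrite !inE => /andP [].
have X1A' : X1 \in A by move: X1A; rewrite !inE => /andP [].
have [v0 v0XU] : exists v0, v0 \in X0 :&: U.
  apply/set0Pn; apply/negP => /eqP E0.
  by move: (hanti _ _ X0A X1A' (negbT (introF eqP (fun e => (negP nX10) (introT eqP (esym e))))));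
    rewrite E0 sub0set.
move: v0XU; rewrite inE => /andP [v0X0 v0U].
case: L2G => m [X [[Xinj Xcov] HL]].
have XE : forall i, X i \in E by move=> i; apply/Xcov; exists i.
pose R := fun i => Rel add zero a0 a X0 A U (X i).
have HR : forall i, is_Krel zero (X i) (R i) by move=> i; apply: Krel_cnt.
have HP : pairwise_consistent add zero X R.
  move=> q hq idx; case: q hq idx => [|[|[|q]]] // hq idx.
  - exists (fun _ => zero); split.
      by split; [move=> t; case | exists [::] => t; case].
    by case.
  - have [W [h1 h3 h4]] := pair_ok hK X0 a0 hanti hI ha (XE (idx ord0)) (XE (idx ord0)).
    exists W; split.
      have -> : \bigcup_(j < 1) X (idx j) = X (idx ord0) :|: X (idx ord0).
        by rewrite big_ord_recl big_ord0 setU0 setUid.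
      exact: h1.
    by move=> j; rewrite (ord1 j).
  - have [W [h1 h3 h4]] := pair_ok hK X0 a0 hanti hI ha (XE (idx ord0))
      (XE (idx (lift ord0 ord0))).
    exists W; split.
      have -> : \bigcup_(j < 2) X (idx j) = X (idx ord0) :|: X (idx (lift ord0 ord0)).
        by rewrite big_ord_recl big_ord_recl big_ord0 setU0.
      exact: h1.
    case=> [[|[|//]] hj].
      by have -> : Ordinal hj = ord0 by apply: val_inj.
    by have -> : Ordinal hj = lift ord0 ord0 by apply: val_inj.
have [W [_ HW]] := HL (@D3 V) R HR HP m (leqnn m) id.
have [i0 Xi0] : exists i0, X i0 = X0 by apply/Xcov; apply: (subsetP hAE).
have labX : forall Y, Y \in A -> labU A U Y = Some Y by move=> Y YA; apply: lab_eq.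
pose y0 : Om V := upd [ffun _ => 0] (Some v0) (a v0 X0).
have a0n : a v0 X0 != 0 by rewrite ha X0A v0X0 v0U.
have Qy0 : Qp a X0 (labU A U X0) y0.
  rewrite labX // /Qp /y0 Lupd /= eqxx ffunE subr0 sqZ3 // big1 ?add0r //.
  by move=> v _; rewrite ffunE mulr0.
have nz0 : R i0 (proj X0 y0) <> zero.
  rewrite /R /Rel Xi0 => /(nm_eq0 hK a0nz) /eqP; rewrite mul1n /cnt cards_eq0 => /eqP E0.
  have : y0 \in set0 by rewrite -E0 inE Qy0 eqxx.
  by rewrite inE.
have [s0 [_ _ hs0]] := HW i0.
move: nz0; rewrite hs0 => hf; have [w] := foldr_ex hK hf; rewrite mem_filter => /andP [_ ws0] Ww.
pose wv : V -> 'Z_3 := fun v => odflt 0 (w v).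
have key : forall Y, Y \in A -> \sum_v a v Y * wv v = cst X0 (Some Y).
  move=> Y YA; have [i Xi] : exists i, X i = Y by apply/Xcov; apply: (subsetP hAE).
  have [s [_ ss hs]] := HW i.
  have : R i (restr (X i) w) <> zero.
    rewrite hs; apply: (foldr_nz hK (x := w)) => //.
    by rewrite mem_filter eqxx ss.
  rewrite /R /Rel => hW; have [y [Qy Py]] := W_supp hW.
  move: Qy; rewrite Xi labX // /Qp /= => /eqP <-.
  apply: eq_bigr => v _.
  case: (eqVneq (a v Y) 0) => [->|nz]; first by rewrite !mul0r.
  move: nz; rewrite ha => /and3P [_ vY _].
  have := congr1 (fun t : ptuple (@D3 V) => t v) Py.
  by rewrite /proj /restr !ffunE Xi vY /wv => <-.
have : \sum_(Y in A) cst X0 (Some Y) = \sum_(Y in A) \sum_v a v Y * wv v.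
  by apply: eq_bigr => Y YA; rewrite key.
rewrite (bigD1 X0) //= eqxx big1 ?addr0; last first.
  by move=> Y /andP [_ nY]; rewrite (negbTE nY).
rewrite exchange_big /= big1; first by move/eqP.
move=> v _; rewrite -mulr_suml.
have -> : \sum_(Y in A) a v Y = \sum_Y a v Y.
  rewrite big_mkcond; apply: eq_bigr => Y _; case YA: (Y \in A) => //.
  by apply/esym/eqP; rewrite -[_ == _]negbK ha YA.
by rewrite hsum mul0r.
Qed.

Local Close Scope ring_scope.

Theorem theorem5 (K : Type) (add : K -> K -> K) (zero : K)
  (V : finType) (E : {set {set V}}) :
  positive_comm_monoid add zero ->
  hypergraph E ->
  local_to_global add zero E ->
  acyclic E.
Proof.
move=> hK _ L2G; apply: acyclic_of => A U hAE hI h2 hv hanti.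
exact: (stuck_false hK L2G hAE hI h2 hv hanti).
Qed.
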